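(* Let $\mathbb{X}$ be a Banach space, $\varphi:\mathbb{X}\to\mathbb{R}\cup\{+\infty\}$ a proper lower semicontinuous function, $\mathbf{S}_\varphi:=\{x\in\mathbb{X}:\varphi(x)\le0\}$, and $\bar x\in\mathbf{S}_\varphi$. (i) Suppose that $\mathbf{S}_\varphi$ has the Shapiro first order contact property around $\bar x$ and that the inequality $\varphi(x)\le0$ has a local error bound at $\bar x$. Then there exist $\tau,r\in(0,+\infty)$ such that $$\mathbf{e}\big(\{h\in\mathbb{X}:\varphi'_H(x;h)\le1\},\ \mathbf{T}^{\mathbf B}(\mathbf{S}_\varphi,x)\big)\le\tau \qquad(\ast)$$ holds for all $x\in\mathbf{S}_\varphi\cap\mathbf{B}(\bar x,r)$ with $\varphi(x)=0$. (ii) Suppose that ${\rm bd}(\mathbf{S}_\varphi)\subseteq\varphi^{-1}(0)$, that $\varphi$ has the epigraphical Shapiro first order contact property at $\bar x$, and that there exist $\tau,r\in(0,+\infty)$ such that $(\ast)$ holds for all $x\in{\rm bd}(\mathbf{S}_\varphi)\cap\mathbf{B}(\bar x,r)$. Then the inequality $\varphi(x)\le0$ has a local error bound at $\bar x$.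
   Context: $\mathbf{B}(a,\delta)$ is the open ball with center $a$ and radius $\delta$; ${\rm bd}$ denotes boundary; $\mathbf{d}(x,D):=\inf\{\|x-y\|:y\in D\}$. Excess: for $C,D\subseteq\mathbb{X}$, $\mathbf{e}(C,D):=\sup_{x\in C}\mathbf{d}(x,D)$, with $\mathbf{e}(\emptyset,D)=0$ if $D\ne\emptyset$ and $=\infty$ otherwise. Lower Hadamard directional derivative: $\varphi'_H(x;h):=\liminf_{t\to0^+,\,h'\to h}\frac{\varphi(x+th')-\varphi(x)}{t}$. For a closed set $C$ and $c\in C$, the Bouligand tangent cone $\mathbf{T}^{\mathbf B}(C,c)$ is the set of all $v$ for which there exist $v_n\to v$, $t_n\downarrow0$ with $c+t_nv_n\in C$ for all $n$. A closed set $C$ has the Shapiro first order contact property at $a\in C$ if for every $\varepsilon>0$ there is $\delta>0$ with $\mathbf{d}(x-u,\mathbf{T}^{\mathbf B}(C,u))\le\varepsilon\|x-u\|$ for all $x,u\in C\cap\mathbf{B}(a,\delta)$; it has this property around $\bar x$ if there is a neighborhood $U$ of $\bar x$ such that it has the property at every point of $C\cap U$. $\varphi$ has the epigraphical Shapiro first order contact property at $\bar x\in{\rm dom}\,\varphi$ if ${\rm epi}(\varphi)=\{(x,\alpha)\in\mathbb{X}\times\mathbb{R}:\varphi(x)\le\alpha\}$ (with norm $\|(x,\alpha)\|=\|x\|+|\alpha|$) has the Shapiro first order contact property at $(\bar x,\varphi(\bar x))$. The inequality $\varphi(x)\le0$ has a local error bound at $\bar x\in\mathbf{S}_\varphi$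 if there exist $\tau,\delta\in(0,+\infty)$ with $\mathbf{d}(x,\mathbf{S}_\varphi)\le\tau\max\{\varphi(x),0\}$ for all $x\in\mathbf{B}(\bar x,\delta)$. *)

(* Defs.v *)
From HB Require Import structures.
From mathcomp Require Import all_boot all_order all_algebra.
From mathcomp Require Import all_classical all_reals all_analysis.
Set Implicit Arguments. Unset Strict Implicit. Unset Printing Implicit Defensive.
Import Order.TTheory GRing.Theory Num.Theory.
Import numFieldNormedType.Exports.
Local Open Scope classical_set_scope.
Local Open Scope ring_scope.

Section Defs.
Variable R : realType.

Definition sublevel {X : Type} (phi : X -> \bar R) : set X :=
  [set x | (phi x <= 0)%E].

Definition proper_fun {X : Type} (phi : X -> \bar R) : Prop :=
  (exists x, (phi x < +oo)%E) /\ (forall x, phi x <> -oo%E).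

(* distance with respect to a given norm N; d(x, set0) = +oo *)
Definition dist_N {V : zmodType} (N : V -> R) (x : V) (D : set V) : \bar R :=
  ereal_inf [set (N (x - y))%:E | y in D].

Definition dist {V : normedModType R} (x : V) (D : set V) : \bar R :=
  dist_N (fun v => `|v|) x D.

Definition excess {V : normedModType R} (C D : set V) : \bar R :=
  if `[< C = set0 >] then (if `[< D = set0 >] then +oo%E else 0%E)
  else ereal_sup [set dist x D | x in C].

Definition bouligand {V : normedModType R} (C : set V) (c : V) : set V :=
  [set v | exists (vn : nat -> V) (tn : nat -> R),
     vn @ \oo --> v /\ tn @ \oo --> (0 : R) /\ (forall n, 0 < tn n) /\
     (forall n, C (c + tn n *: vn n))].

Definition shapiro_at_N {V : normedModType R} (N : V -> R) (C : set V) (a : V)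
  : Prop :=
  forall eps : R, 0 < eps -> exists2 delta : R, 0 < delta &
    forall x u, C x -> C u -> N (x - a) < delta -> N (u - a) < delta ->
      (dist_N N (x - u) (bouligand C u) <= (eps * N (x - u))%:E)%E.

Definition shapiro_at {V : normedModType R} (C : set V) (a : V) : Prop :=
  shapiro_at_N (fun v => `|v|) C a.

Definition shapiro_around {V : normedModType R} (C : set V) (xb : V) : Prop :=
  exists2 U, nbhs xb U & forall a, C a -> U a -> shapiro_at C a.

Definition epi {X : normedModType R} (phi : X -> \bar R) : set (X * R) :=
  [set p | (phi p.1 <= p.2%:E)%E].

Definition epi_shapiro_at {X : normedModType R} (phi : X -> \bar R) (xb : X)
  : Prop :=
  shapiro_at_N (fun p : X * R => `|p.1| + `|p.2|) (epi phi) (xb, fine (phi xb)).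

(* lower Hadamard directional derivative:
   liminf_{t -> 0+, h' -> h} (phi(x + t h') - phi(x)) / t *)
Definition hadamard_lower {X : normedModType R} (phi : X -> \bar R) (x h : X)
  : \bar R :=
  ereal_sup [set ereal_inf
     [set q | exists t k, 0 < t < delta /\ `|k - h| < delta /\
                q = ((phi (x + t *: k)%R - phi x) * (t^-1)%:E)%E]
   | delta in [set d : R | 0 < d]].

Definition local_error_bound {X : normedModType R} (phi : X -> \bar R) (xb : X)
  : Prop :=
  exists tau delta : R, 0 < tau /\ 0 < delta /\
    forall x, ball xb delta x ->
      (dist x (sublevel phi) <= tau%:E * maxe (phi x) 0)%E.

Definition bd {X : topologicalType} (A : set X) : set X :=
  closure A `\` interior A.

Definition star_estimate {X : normedModType R} (phi : X -> \bar R) (tau : R)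
  (x : X) : Prop :=
  (excess [set h | (hadamard_lower phi x h <= 1)%E]
          (bouligand (sublevel phi) x) <= tau%:E)%E.

End Defs.

(* Main.v *)
Require Import Defs.
From HB Require Import structures.
From mathcomp Require Import all_boot all_order all_algebra.
From mathcomp Require Import all_classical all_reals all_analysis.
Import Order.TTheory GRing.Theory Num.Theory.
Import numFieldNormedType.Exports.
Local Open Scope classical_set_scope.
Local Open Scope ring_scope.
From mathcomp Require Import ring lra.
Lemma small_inv {R : realType} (c : R) : 0 < c -> exists N : nat, N.+1%:R^-1 < c.
Proof.
move=> c0; exists (Num.Def.archi_bound c^-1).
have ic : 0 < c^-1 by rewrite invr_gt0.
have h := archi_boundP (ltW ic).
rewrite -[c]invrK ltf_pV2 ?posrE ?invr_gt0 //.
rewrite invrK; apply: lt_trans h _; by rewrite ltr_nat.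
Qed.

Lemma ekeland (R : realType) (X : completeNormedModType R) (S : set X) (g : X -> R)
  (eta : R) (z0 : X) :
  closed S -> S z0 -> continuous g -> (forall z, 0 <= g z) -> 0 < eta ->
  exists2 w, S w & g w <= g z0 /\ forall z, S z -> g w <= g z + eta * `|z - w|.
Proof.
move=> cS Sz0 cg g0 eta0.
pose P u := [set z | S z /\ g z + eta * `|z - u| <= g u].
have Prefl u : S u -> P u u by move=> Su; split => //; rewrite subrr normr0 mulr0 addr0.
have Ptrans a b c : P a b -> P b c -> P a c.
  move=> [Sb Hb] [Sc Hc]; split => //.
  have t := ler_distD b c a.
  have := ler_wpM2l (ltW eta0) t; rewrite mulrDr => t'.
  lra.
have step : forall p : X * nat, exists z, S p.1 ->
    P p.1 z /\ forall x, P p.1 x -> g z <= g x + (p.2.+1%:R)^-1.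
  move=> [u n] /=.
  have [Su|nSu] := pselect (S u); last by exists u.
  pose E := g @` P u.
  have hinf : has_inf E.
    split; first by exists (g u); exists u => //; exact: Prefl.
    by exists 0 => _ [x _ <-]; exact: g0.
  have en : 0 < (n.+1%:R : R)^-1 by rewrite invr_gt0 ltr0Sn.
  have [_ [z Pz <-] hz] := inf_adherent en hinf.
  exists z => _; split => // x Px; apply: le_trans (ltW hz) _.
  rewrite lerD2r; apply: ge_inf; first exact: hinf.2.
  by exists x.
have [f Hf] := choice step.
pose u := fix u n := if n is m.+1 then f (u m, m) else z0.
have uS n : S (u n).
  elim: n => [//|n IH] /=.
  exact: ((Hf (u n, n)) IH).1.1.
have Hu n : P (u n) (u n.+1) /\ forall x, P (u n) x -> g (u n.+1) <= g x + n.+1%:R^-1.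
  exact: (Hf (u n, n)) (uS n).
have Pmono n m : (n <= m)%N -> P (u n) (u m).
  elim: m => [|m IH] hnm.
    by move: hnm; rewrite leqn0 => /eqP ->; exact: Prefl.
  move: hnm; rewrite leq_eqVlt => /orP [/eqP ->|]; first exact: Prefl.
  by rewrite ltnS => /IH Pn; exact: Ptrans Pn (Hu m).1.
have key n x : P (u n.+1) x -> eta * `|x - u n.+1| <= n.+1%:R^-1.
  move=> Px; have Pnx := Ptrans _ _ _ (Hu n).1 Px.
  have := (Hu n).2 x Pnx; case: Px => _ H1 H2.
  by rewrite -(lerD2l (g x)); exact: le_trans H1 H2.

have cvu : cvgn u.
  apply/cauchy_cvgP/cauchy_ballP => e e0.
  have ee : 0 < e * eta / 2 by rewrite divr_gt0 // mulr_gt0.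
  have [N HN] := small_inv _ ee.
  exists (u @` [set n | (N < n)%N], u @` [set n | (N < n)%N]).
    by split; exists N.+1 => // n hn; exists n.
  move=> [a b] [[n hn <-] [m hm <-]] /=.
  rewrite -ball_normE /ball_ /=.
  have h1 := key N _ (Pmono N.+1 n hn).
  have h2 := key N _ (Pmono N.+1 m hm).
  have t := ler_distD (u N.+1) (u n) (u m).
  rewrite [`|u N.+1 - u m|]distrC in t.
  have := ler_wpM2l (ltW eta0) t; rewrite mulrDr => t'.
  rewrite -(ltr_pM2l eta0).
  have : eta * e = e * eta / 2 + e * eta / 2 by rewrite mulrC; field.
  move=> ->; exact: le_lt_trans t' (ltrD (le_lt_trans h1 HN) (le_lt_trans h2 HN)).


set w := limn u.
have Pw n : P (u n) w.
  split.
    apply: (closed_cvg S cS _ w cvu).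
    by exists 0%N => // m _; exact: uS.
  have hc : (fun m => g (u m) + eta * `|u m - u n|) @ \oo --> g w + eta * `|w - u n|.
    apply: cvgD.
      by apply: continuous_cvg => //; exact: cg.
    apply: cvgMr; apply: cvg_norm; apply: cvgB => //; exact: cvg_cst.
  apply: (closed_cvg [set x | x <= g (u n)] (@closed_le _ _) _ _ hc).
  by exists n => // m hm; exact: (Pmono n m hm).2.
exists w; first exact: (Pw 0%N).1.
split.
  have [_ h] := Pw 0%N; apply: le_trans h; rewrite lerDl.
  by rewrite mulr_ge0 // ltW.
move=> z Sz; case: (leP (g w) (g z + eta * `|z - w|)) => // lt.
have [zw|zw] := eqVneq z w.
  by move: lt; rewrite zw subrr normr0 mulr0 addr0 ltxx.
have Pwz : P w z by split => //; exact: ltW.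
have a0 : 0 < eta * `|z - w| / 2.
  by rewrite divr_gt0 // mulr_gt0 // normr_gt0 subr_eq0.
have [N HN] := small_inv _ a0.
have h1 := key N z (Ptrans _ _ _ (Pw N.+1) Pwz).
have h2 := key N w (Pw N.+1).
have t := ler_distD (u N.+1) z w.
rewrite [`|u N.+1 - w|]distrC in t.
have := ler_wpM2l (ltW eta0) t; rewrite mulrDr => t'.
have : eta * `|z - w| < eta * `|z - w| / 2 + eta * `|z - w| / 2.
  exact: le_lt_trans t' (ltrD (le_lt_trans h1 HN) (le_lt_trans h2 HN)).
by rewrite -splitr ltxx.
Qed.
Section Helpers.
Variable R : realType.

Lemma dist_N_le {V : zmodType} (N : V -> R) (x y : V) (D : set V) :
  D y -> (dist_N N x D <= (N (x - y))%:E)%E.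
Proof. by move=> Dy; apply: ereal_inf_lbound; exists y. Qed.

Lemma dist_le {V : normedModType R} (x y : V) (D : set V) :
  D y -> (dist x D <= (`|x - y|)%:E)%E.
Proof. exact: dist_N_le. Qed.

Lemma dist_N_lt {V : zmodType} (N : V -> R) (x : V) (D : set V) (r : R) :
  (dist_N N x D < r%:E)%E -> exists2 y, D y & N (x - y) < r.
Proof.
move=> /ereal_inf_lt [_ [y Dy <-]]; rewrite lte_fin => h; by exists y.
Qed.

Lemma bouligand0 {V : normedModType R} (C : set V) c : C c -> bouligand C c 0.
Proof.
move=> Cc; exists (fun _ => 0), (fun n => n.+1%:R^-1); split; first exact: cvg_cst.
split; first exact: cvg_harmonic.
split; first by move=> n; rewrite invr_gt0 ltr0Sn.
by move=> n; rewrite scaler0 addr0.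
Qed.

Lemma bouligandZ {V : normedModType R} (C : set V) c v (k : R) :
  0 < k -> bouligand C c v -> bouligand C c (k *: v).
Proof.
move=> k0 [vn [tn [hv [ht [tp Cn]]]]].
exists (fun n => k *: vn n), (fun n => tn n / k); split.
  by apply: cvgZ => //; exact: cvg_cst.
split; first by have := cvgM ht (cvg_cst k^-1); rewrite mul0r; apply.
split; first by move=> n; rewrite divr_gt0.
move=> n; rewrite scalerA divfK ?gt_eqF //.
Qed.

Lemma tangent_ineq {V : normedModType R} (S : set V) (y w v : V) (eta : R) :
  0 <= eta -> (forall z, S z -> `|y - w| <= `|y - z| + eta * `|z - w|) ->
  bouligand S w v -> `|y - w| <= `|y - w - v| + eta * `|v|.
Proof.
move=> eta0 Hw [vn [tn [hv [ht [tp Sn]]]]].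
have step n : tn n <= 1 -> `|y - w| <= `|y - w - vn n| + eta * `|vn n|.
  move=> t1; have := Hw _ (Sn n).
  have -> : y - (w + tn n *: vn n) = (1 - tn n) *: (y - w) + tn n *: (y - w - vn n).
    rewrite scalerBl scale1r [tn n *: (y - w - vn n)]scalerBr addrA subrK.
    by rewrite opprD addrA.
  rewrite [w + _]addrC addrK normrZ gtr0_norm //.
  have t1' : 0 <= 1 - tn n by rewrite subr_ge0.
  have := ler_normD ((1 - tn n) *: (y - w)) (tn n *: (y - w - vn n)).
  rewrite !normrZ (ger0_norm t1') (gtr0_norm (tp n)) => hn h.
  rewrite -(ler_pM2l (tp n)) mulrDr mulrCA.
  move: h hn; rewrite mulrBl mul1r; lra.
have hc : (fun n => `|y - w - vn n| + eta * `|vn n|) @ \oo --> `|y - w - v| + eta * `|v|.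
  apply: cvgD; first by apply: cvg_norm; apply: cvgB => //; exact: cvg_cst.
  by apply: cvgM; [exact: cvg_cst | exact: cvg_norm].
have cg : closed [set x : R | `|y - w| <= x] by exact: closed_ge.
apply: (closed_cvg _ cg _ _ hc).
have /cvgrPdist_lt/(_ 1 ltr01) := ht; apply: filterS => n.
rewrite sub0r normrN => /ltW h; exact: step (le_trans (ler_norm _) h).
Qed.

Lemma hadamard_tangent {X : normedModType R} (phi : X -> \bar R) (w h : X) (b c : R) :
  phi w = 0%E -> bouligand (epi phi) (w, 0) (h, b) -> 0 < c -> b <= c ->
  (hadamard_lower phi w (c^-1 *: h) <= 1)%E.
Proof.
move=> pw0 [pn [tn [hp [ht [tp En]]]]] c0 bc.
have h1 : (fun n => (pn n).1) @ \oo --> h by apply: (cvg_comp _ _ hp); exact: cvg_fst.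
have h2 : (fun n => (pn n).2) @ \oo --> b by apply: (cvg_comp _ _ hp); exact: cvg_snd.
apply: ge_ereal_sup => _ [d d0 <-].
apply/lee_addgt0Pr => th th0.
have dc0 : 0 < d / c by rewrite divr_gt0.
have dc1 : 0 < d * c by rewrite mulr_gt0.
have tc0 : 0 < th * c by rewrite mulr_gt0.
have HA : \forall n \near \oo, `|0 - tn n| < d / c by apply: (cvgrPdist_lt tn 0).1.
have HB : \forall n \near \oo, `|h - (pn n).1| < d * c.
  by apply: (cvgrPdist_lt (fun n => (pn n).1) h).1.
have HC : \forall n \near \oo, `|b - (pn n).2| < th * c.
  by apply: (cvgrPdist_lt (fun n => (pn n).2) b).1.
have [n [An [Bn Cn]]] := filter_ex (filterI HA (filterI HB HC)).
move: An Bn Cn; rewrite sub0r normrN => An Bn Cn.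
have En' := En n; rewrite /epi /= add0r in En'.
set t := tn n; set p1 := (pn n).1; set p2 := (pn n).2.
have t0 : 0 < t := tp n.
have tc : 0 < t * c by rewrite mulr_gt0.
apply: (@le_trans _ _ ((phi (w + t *: p1)%R) * ((t * c)^-1)%:E)%E).
  apply: ereal_inf_lbound.
  exists (t * c), (c^-1 *: p1); split.
    apply/andP; split => //.
    by move: An; rewrite gtr0_norm // ltr_pdivlMr.
  split.
    rewrite -scalerBr normrZ gtr0_norm ?invr_gt0 // distrC.
    by rewrite mulrC ltr_pdivrMr.
  by rewrite pw0 sube0 scalerA -mulrA mulfV ?gt_eqF // mulr1.
apply: le_trans (lee_wpmul2r _ En') _; first by rewrite lee_fin ltW // invr_gt0.
rewrite -EFinM -EFinD lee_fin.
have -> : t *: p2 * (t * c)^-1 = p2 / c.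
  rewrite invfM mulrA; congr (_ * _).
  by rewrite [t *: p2]/(t * p2) mulrC mulrA mulVf ?gt_eqF // mul1r.
rewrite ler_pdivrMr // mulrDl mul1r.
have : p2 < b + th * c.
  by move: Cn; rewrite ltr_distlC => /andP [].
lra.
Qed.

Lemma arith2 (L a A H D T1 E : R) : 1 <= T1 -> 0 < a -> 0 <= L -> 0 <= A -> 0 <= H ->
  A < D -> H < a * T1 + D * T1 -> D * T1 = (L + 2 * a) / 8 -> D <= (L + 2 * a) / 8 ->
  E <= (H + A + L) / 8 -> L <= A + H + E -> L <= 3 * (a * T1).
Proof.
move=> T11 a0 L0 A0 H0 AD HD DT Db Eb LE.
have : a <= a * T1 by rewrite ler_peMr // ltW.
lra.
Qed.

Lemma contg {X : normedModType R} (y : X) : continuous (fun z : X => `|y - z|).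
Proof.
move=> z; apply: cvg_norm; apply: cvgB; [exact: cvg_cst | exact: cvg_id].
Qed.

Lemma part2 (X : completeNormedModType R) (phi : X -> \bar R) (xb : X) :
  proper_fun phi -> lower_semicontinuous phi -> sublevel phi xb ->
  bd (sublevel phi) `<=` [set x | phi x = 0%E] -> epi_shapiro_at phi xb ->
  (exists tau r : R, 0 < tau /\ 0 < r /\
      forall x, bd (sublevel phi) x -> ball xb r x -> star_estimate phi tau x) ->
  local_error_bound phi xb.
Proof.
move=> [_ pninf] lsc Sxb bdH eS [tau [r [tau0 [r0 star]]]].
set S := sublevel phi.
have cS : closed S.
  have -> : S = ~` [set x | (0%:E < phi x)%E].
    by apply/seteqP; split => x /=; rewrite /S /sublevel /= leNgt => /negP.
  by apply: open_closedC; exact: (lower_semicontinuousP phi).1 lsc 0.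
have [p0|pn0] := eqVneq (phi xb) 0%E; last first.
  have [int|nint] := pselect (interior S xb); last first.
    by exfalso; move/eqP: pn0; apply; apply: (bdH xb); split => //; exact: subset_closure.
  move: int => /nbhs_ballP [e e0 He].
  exists 1, e; split => //; split => // x /He Sx.
  apply: (le_trans (dist_le x x _ Sx)); rewrite subrr normr0 mul1e.
  by rewrite le_max lexx orbT.
have f0 : fine (phi xb) = 0 by rewrite p0.
set T1 := tau + 1.
have T11 : 1 <= T1 by rewrite /T1 lerDr ltW.
have T10 : 0 < T1 by apply: lt_le_trans T11.
set e0 := (8 * T1)^-1.
have e00 : 0 < e0 by rewrite invr_gt0 mulr_gt0.
have e08 : e0 <= 8^-1.
  by rewrite /e0 lef_pV2 ?posrE ?mulr_gt0 // ler_peMr.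
have e0T : e0 * T1 = 8^-1 by rewrite /e0 invfM -mulrA mulVf ?gt_eqF // mulr1.
have [d0 d00 Hsh] := eS e0 e00.
rewrite f0 in Hsh.
set rho := Num.min r d0 / 2.
have rho0 : 0 < rho by rewrite divr_gt0 // lt_min r0 d00.
have rhor : rho * 2 <= r by rewrite /rho divfK ?ge_min ?lexx //.
have rhod : rho * 2 <= d0 by rewrite /rho divfK // ge_min lexx orbT.
exists (3 * T1), rho; split; first by rewrite mulr_gt0.
split => // y; rewrite -ball_normE /ball_ /= => hy.
have [Sy|nSy] := pselect (S y).
  apply: (le_trans (dist_le y y _ Sy)); rewrite subrr normr0.
  apply: mule_ge0; first by rewrite lee_fin mulr_ge0 // ltW.
  by rewrite le_max lexx orbT.
have T30 : 0 < 3 * T1 by rewrite mulr_gt0.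
case Ey : (phi y) => [a| |]; last by exfalso; exact: pninf Ey.
  2: by rewrite (max_idPl (leey 0%E)) mulry gtr0_sg // mul1e leey.
have a0 : 0 < a.
  by rewrite ltNge; apply/negP => h; apply: nSy; rewrite /S /sublevel /= Ey lee_fin.
have -> : maxe a%:E 0%E = a%:E by apply/max_idPl; rewrite lee_fin ltW.
rewrite -EFinM.
have [ad|ad] := leP (d0 / 2) a.
  apply: (le_trans (dist_le y xb _ Sxb)); rewrite lee_fin.
  have : d0 / 2 <= 3 * T1 * a.
    apply: le_trans ad _; rewrite ler_peMl // ?ltW //.
    lra.
  rewrite distrC in hy; lra.
have [w Sw [gw Hw]] := @ekeland R X S (fun z => `|y - z|) e0 xb cS Sxb (contg y)
  (fun z => normr_ge0 _) e00.
have wxb : `|w - xb| < rho * 2.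
  have := ler_distD y w xb; rewrite [`|w - y|]distrC [`|xb - y|]distrC in hy *.
  lra.
set L := `|y - w|.
have yw : y <> w by move=> e; apply: nSy; rewrite e.
have L0 : 0 < L by rewrite normr_gt0 subr_eq0; apply/eqP.
have bdw : bd S w.
  split; first exact: subset_closure.
  move=> /nbhs_ballP [e1 e10 He1].
  set s := Num.min (1/2) (e1 / (2 * L)).
  have s0 : 0 < s by rewrite lt_min; apply/andP; split; [lra | rewrite divr_gt0 // mulr_gt0].
  have s1 : s <= 1/2 by rewrite ge_min lexx.
  have sL : s * L < e1.
    have : s <= e1 / (2 * L) by rewrite ge_min lexx orbT.
    rewrite ler_pdivlMr ?mulr_gt0 // mulrCA => h.
    have : 0 < s * L by rewrite mulr_gt0.
    lra.
  have Sz : S (w + s *: (y - w)).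
    apply: He1; rewrite -ball_normE /ball_ /= opprD addrA subrr add0r normrN.
    by rewrite normrZ gtr0_norm.
  have := Hw _ Sz.
  have -> : y - (w + s *: (y - w)) = (1 - s) *: (y - w).
    by rewrite scalerBl scale1r opprD addrA.
  rewrite [w + _]addrC addrK !normrZ (gtr0_norm s0) ger0_norm; last lra.
  rewrite -/L mulrBl mul1r.
  have := ler_wpM2r (ltW (mulr_gt0 s0 L0)) e08.
  have : 0 < s * L by rewrite mulr_gt0.
  lra.
have pw0 : phi w = 0%E := bdH w bdw.
have wr : ball xb r w by rewrite -ball_normE /ball_ /= distrC; lra.
have stw := star w bdw wr.
have ep1 : epi phi (y, a) by rewrite /epi /= Ey.
have ep2 : epi phi (w, 0 : R) by rewrite /epi /= pw0.
have n1 : `|((y, a) - (xb, 0 : R)).1| + `|((y, a) - (xb, 0 : R)).2| < d0.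
  rewrite /= subr0 (gtr0_norm a0) distrC; lra.
have n2 : `|((w, 0 : R) - (xb, 0 : R)).1| + `|((w, 0 : R) - (xb, 0 : R)).2| < d0.
  rewrite /= subrr normr0 addr0; lra.
have := Hsh (y, a) (w, 0 : R) ep1 ep2 n1 n2; rewrite /=.
rewrite subr0 (gtr0_norm a0) -/L => Hd.
set D := e0 * (L + a) + e0 * a.
have : (dist_N (fun p : X * R => (`|p.1| + `|p.2|)%R) ((y, a) - (w, 0%R))
   (bouligand (epi phi) (w, 0%R)) < D%:E)%E.
  apply: (le_lt_trans Hd); rewrite lte_fin /D ltrDl mulr_gt0 //.
move=> /dist_N_lt [[h b] Tz] /=; rewrite subr0 => Nz.
set A := `|y - w - h|.
have AD : A < D by rewrite -/A in Nz; have := normr_ge0 (a - b); lra.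
have bc : b <= a + D.
  have := ler_norm (b - a); rewrite [`|b - a|]distrC => hb.
  have := normr_ge0 (y - w - h); lra.
set c := a + D.
have D0 : 0 <= D.
  by rewrite /D; have := mulr_gt0 e00 (addr_gt0 L0 a0); have := mulr_gt0 e00 a0; lra.
have c0 : 0 < c by rewrite /c; lra.
have Hh := @hadamard_tangent _ phi w h b c pw0 Tz c0 bc.
move: stw; rewrite /star_estimate /excess asboolF; last first.
  by move=> C0; have : [set h | (hadamard_lower phi w h <= 1)%E] (c^-1 *: h) by [];
    rewrite C0.
move=> stw.
have dh0 : (dist (c^-1 *: h) (bouligand S w) <= tau%:E)%E.
  apply: le_trans stw; apply: ereal_sup_ubound; by exists (c^-1 *: h).
have dh : (dist (c^-1 *: h) (bouligand S w) < T1%:E)%E.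
  by apply: le_lt_trans dh0 _; rewrite lte_fin /T1 ltrDl.
have [v' Tv' Hv'] := dist_N_lt _ _ _ _ dh.
have Tv := bouligandZ _ _ _ _ c0 Tv'.
set H := `|h - c *: v'|.
have Hv : H < c * T1.
  rewrite /H; have -> : h - c *: v' = c *: (c^-1 *: h - v').
    by rewrite scalerBr scalerA mulfV ?gt_eqF // scale1r.
  by rewrite normrZ gtr0_norm // ltr_pM2l.
have TI := tangent_ineq _ _ _ _ _ (ltW e00) Hw Tv.
have t1 : `|y - w - c *: v'| <= A + H := ler_distD h (y - w) (c *: v').
have t2 : `|c *: v'| <= H + A + L.
  have := ler_distD h (c *: v') 0; rewrite !subr0 [`|c *: v' - h|]distrC -/H.
  have := ler_distD (y - w) h 0; rewrite !subr0 [`|h - (y - w)|]distrC -/A -/L.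
  lra.
have t3 : e0 * `|c *: v'| <= (H + A + L) / 8.
  apply: le_trans (ler_wpM2l (ltW e00) t2) _.
  rewrite mulrC; apply: ler_wpM2l => //.
  by rewrite /H /A /L !addr_ge0.
have DE : D = e0 * (L + 2 * a) by rewrite /D; ring.
have DT : D * T1 = (L + 2 * a) / 8 by rewrite DE mulrAC e0T mulrC.
have Db : D <= (L + 2 * a) / 8.
  rewrite DE mulrC; apply: ler_wpM2l => //.
  by rewrite addr_ge0 // ?mulr_ge0 // ltW.
have HT : H < a * T1 + D * T1 by rewrite -mulrDl.
have LE : L <= A + H + e0 * `|c *: v'| by rewrite -/L in TI; lra.
have fin := @arith2 L a A H D T1 _ T11 a0 (ltW L0) (normr_ge0 _) (normr_ge0 _) AD HT DT Db t3 LE.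
apply: (le_trans (dist_le y w _ Sw)); rewrite lee_fin -/L.
by rewrite -mulrA [T1 * a]mulrC.
Qed.

Lemma part1 (X : normedModType R) (phi : X -> \bar R) (xb : X) :
  proper_fun phi -> shapiro_around (sublevel phi) xb -> local_error_bound phi xb ->
  exists tau r : R, 0 < tau /\ 0 < r /\
      forall x, sublevel phi x -> ball xb r x -> phi x = 0%E ->
        star_estimate phi tau x.
Proof.
move=> [_ pninf] [U nU HU] [tau [del [tau0 [del0 Heb]]]].
set S := sublevel phi.
move: nU => /nbhs_ballP [r0 r00 Hr0].
set r := Num.min r0 (del / 2).
have rr0 : r <= r0 by rewrite ge_min lexx.
have rdel : r <= del / 2 by rewrite ge_min lexx orbT.
exists tau, r; split => //; split.
  by rewrite lt_min r00 divr_gt0.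
move=> x Sx; rewrite -ball_normE /ball_ /= => bx px0.
have Ux : U x by apply: Hr0; rewrite -ball_normE /ball_ /=; lra.
have shx := HU x Sx Ux.
rewrite /star_estimate /excess.
have [C0|C0] := pselect ([set h | (hadamard_lower phi x h <= 1)%E] = set0).
  rewrite asboolT // asboolF; first by rewrite lee_fin ltW.
  by move=> T0; have := @bouligand0 X S x Sx; rewrite T0.
rewrite asboolF //.
apply: ge_ereal_sup => _ [h Ch <-].
set Q := `|h| + 2 * tau + 2.
have Q0 : 0 < Q by rewrite /Q; have := normr_ge0 h; lra.
set M := tau + Q + 3.
have M0 : 0 < M by rewrite /M; lra.
apply/lee_addgt0Pr => th th0.
set eps := Num.min 1 (th / M).
have eps0 : 0 < eps by rewrite lt_min ltr01 divr_gt0.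
have eps1 : eps <= 1 by rewrite ge_min lexx.
have epsM : eps * M <= th.
  by rewrite -ler_pdivlMr // ge_min lexx orbT.
suff : (dist h (bouligand S x) <= (tau + eps * M)%:E)%E.
  by move=> H; apply: le_trans H _; rewrite -EFinD lee_fin lerD2l.
have [dx dx0 Hsh] := shx eps eps0.
set d := Num.min eps (Num.min (del / (2 * Q)) (dx / Q)).
have d0 : 0 < d.
  have m0 (a b : R) : 0 < a -> 0 < b -> 0 < Num.min a b.
    by move=> ha hb; rewrite lt_min ha hb.
  apply: (m0 _ _) => //; apply: (m0 _ _); apply: divr_gt0 => //; exact: mulr_gt0.
have deps : d <= eps by rewrite ge_min lexx.
have ddel : d * Q <= del / 2.
  have : d <= del / (2 * Q) by rewrite !ge_min lexx orbT.
  by rewrite ler_pdivlMr ?mulr_gt0 // mulrCA mulrC -ler_pdivlMr.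
have ddx : d * Q <= dx.
  have : d <= dx / Q by rewrite !ge_min lexx !orbT.
  by rewrite ler_pdivlMr.
have Hinf : (ereal_inf [set q | exists (t : R) (k : X), (0 < t < d)%R /\ (`|k - h| < d)%R /\
     q = ((phi (x + t *: k)%R - phi x) * (t^-1)%:E)%E] < (1 + eps)%:E)%E.
  apply: le_lt_trans (le_trans _ Ch) _.
    by apply: ereal_sup_ubound; exists d.
  by rewrite lte_fin ltrDl.
move: Hinf => /ereal_inf_lt [_ [t [k [/andP [t0 td] [kh ->]]]]].
rewrite px0 sube0.
case Ek : (phi (x + t *: k)) => [r1| |]; last by exfalso; exact: pninf Ek.
  2: by rewrite mulyr gtr0_sg ?invr_gt0 // mul1e ltNge leey.
rewrite -EFinM lte_fin ltr_pdivrMr // => r1lt.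
have kQ : `|k| <= Q.
  have := ler_distD h k 0; rewrite !subr0 /Q; lra.
have tk : t * `|k| < d * Q.
  apply: le_lt_trans (ler_wpM2l (ltW t0) kQ) _.
  by rewrite ltr_pM2r.
have bk : ball xb del (x + t *: k).
  rewrite -ball_normE /ball_ /=.
  have e : x - (x + t *: k) = - (t *: k) by rewrite opprD addrA subrr add0r.
  have := ler_distD x xb (x + t *: k).
  rewrite e normrN normrZ gtr0_norm //; lra.
have Hd := Heb _ bk.
rewrite Ek in Hd.
set rho1 := tau * (1 + eps) + eps.
have : (dist (x + t *: k)%R S < (rho1 * t)%:E)%E.
  apply: le_lt_trans Hd _.
  apply: (@le_lt_trans _ _ (tau * ((1 + eps) * t))%:E).
    rewrite EFinM; apply: lee_wpmul2l; first by rewrite lee_fin ltW.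
    rewrite ge_max !lee_fin (ltW r1lt) /=; apply: mulr_ge0; lra.
  by rewrite lte_fin /rho1; have := mulr_gt0 eps0 t0; lra.
move=> /(dist_N_lt _ _ _ _) [u Su Hu].
have rho12 : rho1 <= 2 * tau + 1.
  have := ler_wpM2l (ltW tau0) eps1; rewrite /rho1 mulrDr mulr1; lra.
have k1 : `|k| <= `|h| + 1 by have := ler_distD h k 0; rewrite !subr0; lra.
have ux : `|u - x| < t * Q.
  have e2 : x + t *: k - x = t *: k by rewrite addrC addKr.
  have := ler_distD (x + t *: k) u x.
  rewrite [`|u - (x + t *: k)|]distrC e2 normrZ gtr0_norm //.
  have : rho1 * t <= (2 * tau + 1) * t by rewrite ler_pM2r.
  have : t * Q = t * `|h| + (2 * tau + 1) * t + t by rewrite /Q; ring.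
  have := ler_wpM2l (ltW t0) k1.
  lra.
have ux' : `|u - x| < dx.
  apply: lt_le_trans ux _; apply: le_trans ddx; rewrite ler_pM2r //; exact: ltW.
have xx : `|x - x| < dx by rewrite subrr normr0.
have Hs := Hsh u x Su Sx ux' xx.
have : (dist_N (fun v : X => `|v|%R) (u - x) (bouligand (sublevel phi) x) <
    (eps * `|u - x| + eps * t)%:E)%E.
  by apply: le_lt_trans Hs _; rewrite lte_fin ltrDl mulr_gt0.
move=> /(dist_N_lt _ _ _ _) [v Tv Hv].
have ti0 : 0 < t^-1 by rewrite invr_gt0.
have Tv' := bouligandZ _ _ _ _ ti0 Tv.
apply: le_trans (dist_le h (t^-1 *: v)%R _ Tv') _; rewrite lee_fin.
rewrite -(ler_pM2l t0).
have e3 : t *: h - v = t *: (h - t^-1 *: v).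
  by rewrite scalerBr scalerA mulfV ?gt_eqF // scale1r.
have <- : `|t *: h - v| = t * `|h - t^-1 *: v| by rewrite e3 normrZ gtr0_norm.
have t1 := ler_distD (t *: k) (t *: h) v.
have t2 := ler_distD (u - x) (t *: k) v.
have e5 : t *: k - (u - x) = x + t *: k - u by rewrite opprB addrA [x + _]addrC.
rewrite e5 -scalerBr normrZ gtr0_norm // in t1 t2 *.
have p1 : t * `|h - k| <= t * eps.
  by rewrite ler_pM2l // distrC; apply: ltW; apply: lt_le_trans kh deps.
have p2 : eps * `|u - x| <= eps * (t * Q) by rewrite ler_pM2l // ltW.
move: Hu; rewrite /rho1 /M /Q => Hu.
move: p2; rewrite /Q => p2.
lra.
Qed.

End Helpers.

Theorem theorem4p1 (R : realType) (X : completeNormedModType R)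
  (phi : X -> \bar R) (xb : X) :
  proper_fun phi -> lower_semicontinuous phi -> sublevel phi xb ->
  (* (i) *)
  ((shapiro_around (sublevel phi) xb -> local_error_bound phi xb ->
    exists tau r : R, 0 < tau /\ 0 < r /\
      forall x, sublevel phi x -> ball xb r x -> phi x = 0%E ->
        star_estimate phi tau x)
  /\
  (* (ii) *)
   (bd (sublevel phi) `<=` [set x | phi x = 0%E] ->
    epi_shapiro_at phi xb ->
    (exists tau r : R, 0 < tau /\ 0 < r /\
      forall x, bd (sublevel phi) x -> ball xb r x -> star_estimate phi tau x) ->
    local_error_bound phi xb)).
Proof.
move=> pp lsc Sxb; split.
  by move=> sh eb; exact: (@part1 R X phi xb pp sh eb).
by move=> bdH eS st; exact: (@part2 R X phi xb pp lsc Sxb bdH eS st).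
Qed.
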